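(* Let $\alpha=\{a_k\}_{k\ge1}$ be a sequence of positive numbers with $a_k\to\infty$ and $0<x_\alpha\le1$, and let $j\ge2$. If $I(\alpha;j)=\infty$, then $\lim_{N\to\infty}E[U_j^N]=\infty$.
   Context: For $N\ge2$, coupon type $k\in\{1,\dots,N\}$ has probability $a_k/\sum_{i=1}^Na_i$; $U_j^N$ is the number of empty album places of the $j$-th collector when the first collector completes her set (each collector passes duplicates to the next one), with $$E[U_j^N]=\sum_{k=1}^N\int_0^\infty a_k e^{-a_k t}\frac{(a_kt)^{j-1}}{(j-1)!}\prod_{i\ne k,\,1\le i\le N}\big(1-e^{-a_i t}\big)\,dt.$$ Define $x_\alpha:=\inf\{x\in[0,1]:\sum_{k=1}^\infty x^{a_k}=\infty\}$; for $x\in(0,x_\alpha)$ let $L(x;\alpha;j):=\sum_{k=1}^\infty a_k^j\frac{x^{a_k}}{1-x^{a_k}}$ and $F(x;\alpha):=\prod_{k=1}^\infty(1-x^{a_k})$, and $$I(\alpha;j):=\frac{1}{(j-1)!}\int_0^{x_\alpha}L(x;\alpha;j)F(x;\alpha)|\ln x|^{j-1}\frac{dx}{x}.$$ *)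

(* Defs.v *)
From Stdlib Require Import Reals Lra Lia Classical ClassicalEpsilon Factorial.
Open Scope R_scope.

(* Indexing convention: the paper's a_1, a_2, ... is represented by
   a 0, a 1, ... ; the paper's index k in {1..N} is k+1 for k in {0..N-1}. *)

Fixpoint sumR (n : nat) (f : nat -> R) : R :=
  match n with O => 0 | S m => sumR m f + f m end.
Fixpoint prodR (n : nat) (f : nat -> R) : R :=
  match n with O => 1 | S m => prodR m f * f m end.

(* real power x^a for x >= 0 (with 0^a = 0 for a > 0) *)
Definition pw (x a : R) : R := if Rle_dec x 0 then 0 else Rpower x a.

(* limit of a sequence (meaningful when it converges) *)
Definition lim (u : nat -> R) : R := epsilon (inhabits 0) (fun l => Un_cv u l).

Definition is_glb (S : R -> Prop) (m : R) : Prop :=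
  (forall x, S x -> m <= x) /\ (forall m', (forall x, S x -> m' <= x) -> m' <= m).

Definition div_set (a : nat -> R) (x : R) : Prop :=
  0 <= x <= 1 /\ ~ (exists l, Un_cv (fun n => sumR n (fun k => pw x (a k))) l).

Definition x_alpha (a : nat -> R) : R := epsilon (inhabits 0) (is_glb (div_set a)).

Definition Lfun (a : nat -> R) (j : nat) (x : R) : R :=
  lim (fun n => sumR n (fun k => a k ^ j * pw x (a k) / (1 - pw x (a k)))).

Definition Ffun (a : nat -> R) (x : R) : R :=
  lim (fun n => prodR n (fun k => 1 - pw x (a k))).

Definition I_integrand (a : nat -> R) (j : nat) (x : R) : R :=
  / INR (fact (j - 1)) * (Lfun a j x * Ffun a x * Rabs (ln x) ^ (j - 1) / x).

(* I(alpha; j) = infinity : the (improper, nonnegative) integral over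
   (0, x_alpha) is unbounded, i.e. Riemann integrals over compact
   subintervals [c,d] of (0, x_alpha) are unbounded. *)
Definition I_infinite (a : nat -> R) (j : nat) : Prop :=
  forall M : R, exists c d, 0 < c <= d /\ d < x_alpha a /\
    exists pr : Riemann_integrable (I_integrand a j) c d, M <= RiemannInt pr.

Definition int_0_inf (f : R -> R) : R :=
  epsilon (inhabits 0) (fun l => forall eps, eps > 0 -> exists T0, forall T
    (pr : Riemann_integrable f 0 T), T0 <= T -> Rabs (RiemannInt pr - l) < eps).

Definition EU_integrand (a : nat -> R) (j N : nat) (t : R) : R :=
  sumR N (fun k => a k * exp (- (a k * t)) * ((a k * t) ^ (j - 1) / INR (fact (j - 1)))
    * prodR N (fun i => if Nat.eq_dec i k then 1 else 1 - exp (- (a i * t)))).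

Definition EU (a : nat -> R) (j N : nat) : R := int_0_inf (EU_integrand a j N).

(* Main.v *)
Require Import Defs.
From Stdlib Require Import Reals Lra Lia Classical ClassicalEpsilon Factorial.
From Coquelicot Require ElemFct.
From Coquelicot Require Import Coquelicot.
Open Scope R_scope.

Lemma pw_pos x y : 0 < x -> pw x y = exp (y * ln x).
Proof. intros H. unfold pw. destruct (Rle_dec x 0); [lra|reflexivity]. Qed.

Lemma lim_eq u l : Un_cv u l -> Defs.lim u = l.
Proof.
  intros H. unfold Defs.lim.
  assert (E : exists l, Un_cv u l) by eauto.
  pose proof (epsilon_spec (inhabits 0) (fun l => Un_cv u l) E) as H2.
  eapply UL_sequence; eauto.
Qed.

Lemma sumR_le n f g : (forall k, (k < n)%nat -> f k <= g k) -> sumR n f <= sumR n g.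
Proof.
  induction n; simpl; intros H; [lra|].
  assert (sumR n f <= sumR n g) by (apply IHn; intros; apply H; lia).
  specialize (H n ltac:(lia)). lra.
Qed.

Lemma sumR_scal n f c : sumR n (fun k => c * f k) = c * sumR n f.
Proof. induction n; simpl; [ring| rewrite IHn; ring]. Qed.

Lemma sumR_minus n f g : sumR n (fun k => f k - g k) = sumR n f - sumR n g.
Proof. induction n; simpl; [ring| rewrite IHn; ring]. Qed.

Lemma sumR_growing f : (forall k, 0 <= f k) -> Un_growing (fun n => sumR n f).
Proof. intros H n. simpl. specialize (H n). lra. Qed.

Lemma prodR_ext n f g : (forall k, (k < n)%nat -> f k = g k) -> prodR n f = prodR n g.
Proof.
  induction n; simpl; intros H; auto.
  rewrite IHn by (intros; apply H; lia). rewrite H by lia. reflexivity.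
Qed.

Lemma prodR_bounds n f : (forall k, 0 <= f k <= 1) -> 0 <= prodR n f <= 1.
Proof.
  induction n; simpl; intros H; [lra|].
  destruct (IHn H). destruct (H n). split; [apply Rmult_le_pos; lra|].
  replace 1 with (1*1) by ring. apply Rmult_le_compat; lra.
Qed.

Lemma sum_ones_div : ~ (exists l, Un_cv (fun n => sumR n (fun _ => 1)) l).
Proof.
  intros [l Hl].
  assert (Hs : forall n, sumR n (fun _ => 1) = INR n).
  { induction n; simpl; [reflexivity| rewrite IHn; symmetry; apply S_INR]. }
  destruct (Hl 1 ltac:(lra)) as [N HN].
  pose proof (HN N ltac:(lia)) as H1. pose proof (HN (N+2)%nat ltac:(lia)) as H2.
  unfold Rdist in *. rewrite Hs in H1, H2. rewrite plus_INR in H2. simpl in H2.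
  apply Rabs_def2 in H1. apply Rabs_def2 in H2. lra.
Qed.

Lemma x_alpha_glb a : is_glb (div_set a) (x_alpha a).
Proof.
  unfold x_alpha. apply epsilon_spec.
  set (E := fun y => div_set a (- y)).
  assert (Hb : bound E).
  { exists 0. intros y [[H1 H2] _]. lra. }
  assert (Hne : exists y, E y).
  { exists (-1). unfold E, div_set. replace (- -1) with 1 by ring. split; [lra|].
    intros [l Hl]. apply sum_ones_div. exists l.
    eapply Un_cv_ext; [|exact Hl]. intros n. simpl.
    clear. induction n; simpl; [reflexivity|]. rewrite IHn.
    f_equal. rewrite pw_pos by lra. rewrite ln_1, Rmult_0_r, exp_0. reflexivity. }
  destruct (completeness E Hb Hne) as [m [Hm1 Hm2]].
  exists (- m). split.
  - intros x Hx. assert (E (- x)) by (unfold E; rewrite Ropp_involutive; exact Hx).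
    specialize (Hm1 _ H). lra.
  - intros m' Hm'. assert (is_upper_bound E (- m')).
    { intros y Hy. specialize (Hm' _ Hy). lra. }
    specialize (Hm2 _ H). lra.
Qed.

Lemma below_x_alpha_cv a y : 0 <= y -> y < x_alpha a -> x_alpha a <= 1 ->
  exists l, Un_cv (fun n => sumR n (fun k => pw y (a k))) l.
Proof.
  intros H0 H1 H2. destruct (x_alpha_glb a) as [Hlb _].
  apply NNPP. intros Hn. assert (div_set a y) by (split; [lra|exact Hn]).
  specialize (Hlb _ H). lra.
Qed.

Lemma a_lower a : (forall k, 0 < a k) -> cv_infty a -> exists b, 0 < b /\ forall k, b <= a k.
Proof.
  intros Hpos Hinf. destruct (Hinf 1) as [N HN].
  assert (forall n, exists b, 0 < b /\ forall k, (k < n)%nat -> b <= a k).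
  { induction n. - exists 1. split; [lra| intros; lia].
    - destruct IHn as [b [Hb Hk]]. exists (Rmin b (a n)). split.
      + apply Rmin_glb_lt; auto.
      + intros k Hk'. destruct (Nat.eq_dec k n).
        * subst. apply Rmin_r.
        * eapply Rle_trans; [apply Rmin_l| apply Hk; lia]. }
  destruct (H N) as [b [Hb Hk]]. exists (Rmin b 1). split.
  - apply Rmin_glb_lt; lra.
  - intros k. destruct (Compare_dec.le_lt_dec N k).
    + specialize (HN k l). eapply Rle_trans; [apply Rmin_r|lra].
    + eapply Rle_trans; [apply Rmin_l| apply Hk; auto].
Qed.

Lemma exp_le' x y : x <= y -> exp x <= exp y.
Proof. intros [H|H]; [left; apply exp_increasing; auto| subst; lra]. Qed.

Lemma ln_le' x y : 0 < x -> x <= y -> ln x <= ln y.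
Proof. intros H0 [H|H]; [left; apply ln_increasing; auto| subst; lra]. Qed.

Lemma pow_le_exp y n : 0 <= y -> y ^ n / INR (fact n) <= exp y.
Proof.
  intros Hy. eapply Rle_trans; [|apply (ElemFct.exp_ge_taylor y n Hy)].
  assert (Hnn : forall k, 0 <= y ^ k / INR (fact k)).
  { intros k. apply Rmult_le_pos; [apply pow_le; auto|].
    left; apply Rinv_0_lt_compat, INR_fact_lt_0. }
  destruct n; simpl; [lra|].
  pose proof (cond_pos_sum _ n Hnn). simpl in *. lra.
Qed.

Lemma exp_neg_lt1 z : z < 0 -> exp z < 1.
Proof. intros H. rewrite <- exp_0. apply exp_increasing. auto. Qed.

Definition tL (a : nat -> R) (j : nat) (x : R) (k : nat) : R :=
  a k ^ j * pw x (a k) / (1 - pw x (a k)).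

Lemma tL_nonneg a j x k : 0 < a k -> 0 < x < 1 -> 0 <= tL a j x k.
Proof.
  intros Ha Hx. unfold tL. rewrite pw_pos by lra.
  assert (ln x < 0) by (rewrite <- ln_1; apply ln_increasing; lra).
  assert (exp (a k * ln x) < 1) by (apply exp_neg_lt1; nra).
  pose proof (exp_pos (a k * ln x)).
  apply Rmult_le_pos; [apply Rmult_le_pos; [apply pow_le; lra|lra]|].
  left; apply Rinv_0_lt_compat; lra.
Qed.

Lemma tL_mono a j x y k : 0 < a k -> 0 < x <= y -> y < 1 -> tL a j x k <= tL a j y k.
Proof.
  intros Ha Hx Hy. unfold tL. rewrite !pw_pos by lra.
  assert (ln y < 0) by (rewrite <- ln_1; apply ln_increasing; lra).
  assert (ln x <= ln y) by (apply ln_le'; lra).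
  assert (exp (a k * ln y) < 1) by (apply exp_neg_lt1; nra).
  assert (E: exp (a k * ln x) <= exp (a k * ln y)) by (apply exp_le'; nra).
  pose proof (exp_pos (a k * ln x)).
  set (p := exp (a k * ln x)) in *. set (q := exp (a k * ln y)) in *.
  unfold Rdiv. rewrite !Rmult_assoc. apply Rmult_le_compat_l; [apply pow_le; lra|].
  apply Rmult_le_compat; try lra.
  - left; apply Rinv_0_lt_compat; lra.
  - apply Rinv_le_contravar; lra.
Qed.

Lemma L_cv a j x : (forall k, 0 < a k) -> cv_infty a -> x_alpha a <= 1 ->
  0 < x < x_alpha a ->
  Un_cv (fun n => sumR n (tL a j x)) (Lfun a j x).
Proof.
  intros Hpos Hinf Hxa Hx.
  destruct (a_lower a Hpos Hinf) as [b [Hb Hbk]].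
  set (y := (x + x_alpha a) / 2).
  destruct (below_x_alpha_cv a y ltac:(unfold y; lra) ltac:(unfold y; lra) Hxa) as [ly Hly].
  assert (Hy : 0 < y < 1) by (unfold y; lra).
  set (u := ln y - ln x).
  assert (Hu : 0 < u) by (unfold u; assert (ln x < ln y) by (apply ln_increasing; unfold y; lra); lra).
  assert (Hlx : ln x < 0) by (rewrite <- ln_1; apply ln_increasing; lra).
  set (D0 := 1 - exp (b * ln x)).
  assert (HD0 : 0 < D0) by (unfold D0; assert (exp (b * ln x) < 1) by (apply exp_neg_lt1; nra); lra).
  set (C := INR (fact j) / u ^ j / D0).
  assert (Hbound : forall k, tL a j x k <= C * pw y (a k)).
  { intros k. unfold tL. rewrite !pw_pos by lra.
    pose proof (Hpos k) as Hak. pose proof (Hbk k) as Hbk'.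
    assert (Ex : exp (a k * ln x) = exp (- (a k * u)) * exp (a k * ln y)).
    { rewrite <- exp_plus. f_equal. unfold u. ring. }
    assert (HA : a k ^ j * exp (- (a k * u)) <= INR (fact j) / u ^ j).
    { pose proof (pow_le_exp (a k * u) j ltac:(nra)) as HT.
      assert (Hf : 0 < INR (fact j)) by apply INR_fact_lt_0.
      assert (Hup : 0 < u ^ j) by (apply pow_lt; lra).
      rewrite Rpow_mult_distr in HT.
      assert (H1 : a k ^ j * u ^ j <= INR (fact j) * exp (a k * u)).
      { apply (Rmult_le_compat_r (INR (fact j))) in HT; [|lra].
        unfold Rdiv in HT. rewrite Rmult_assoc, Rinv_l, Rmult_1_r in HT by lra. lra. }
      assert (H0 : exp (- (a k * u)) * exp (a k * u) = 1) by (rewrite <- exp_plus; replace (- (a k * u) + a k * u) with 0 by ring; apply exp_0).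
      pose proof (exp_pos (- (a k * u))) as He.
      assert (Hkey : a k ^ j * u ^ j * exp (- (a k * u)) <= INR (fact j)).
      { apply (Rmult_le_compat_r (exp (- (a k * u)))) in H1; [|lra].
        eapply Rle_trans; [exact H1|]. rewrite Rmult_assoc, (Rmult_comm (exp _)), H0. lra. }
      apply (Rmult_le_reg_r (u ^ j)); auto. replace (INR (fact j) / u ^ j * u ^ j) with (INR (fact j)) by (field; lra).
      lra. }
    assert (HD : D0 <= 1 - exp (a k * ln x)).
    { unfold D0. assert (exp (a k * ln x) <= exp (b * ln x)) by (apply exp_le'; nra). lra. }
    rewrite Ex. unfold C.
    pose proof (exp_pos (a k * ln y)). pose proof (exp_pos (- (a k * u))).
    assert (0 <= a k ^ j * exp (- (a k * u))) by (apply Rmult_le_pos; [apply pow_le; lra| lra]).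
    replace (a k ^ j * (exp (- (a k * u)) * exp (a k * ln y)) / (1 - exp (- (a k * u)) * exp (a k * ln y)))
      with ((a k ^ j * exp (- (a k * u))) * exp (a k * ln y) * / (1 - exp (- (a k * u)) * exp (a k * ln y))) by (unfold Rdiv; ring).
    rewrite <- Ex in *.
    replace (INR (fact j) / u ^ j / D0 * exp (a k * ln y)) with (INR (fact j) / u ^ j * exp (a k * ln y) * / D0) by (unfold Rdiv; ring).
    apply Rmult_le_compat.
    - apply Rmult_le_pos; lra.
    - left; apply Rinv_0_lt_compat; lra.
    - apply Rmult_le_compat_r; lra.
    - apply Rinv_le_contravar; lra. }
  assert (Hyg : Un_growing (fun n => sumR n (fun k => pw y (a k)))).
  { apply sumR_growing. intros k. rewrite pw_pos by lra. left; apply exp_pos. }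
  assert (HC : 0 <= C).
  { unfold C. unfold Rdiv. apply Rmult_le_pos; [apply Rmult_le_pos|]; try (left; apply Rinv_0_lt_compat).
    - left; apply INR_fact_lt_0. - apply pow_lt; lra. - auto. }
  assert (Hg : Un_growing (fun n => sumR n (tL a j x))).
  { apply sumR_growing. intros k. apply tL_nonneg; auto; lra. }
  destruct (growing_cv _ Hg) as [l Hl].
  { exists (C * ly). intros z [n Hn]. subst z.
    eapply Rle_trans. { apply sumR_le. intros k _. apply Hbound. }
    rewrite sumR_scal. apply Rmult_le_compat_l; auto. apply (growing_ineq _ ly Hyg Hly n). }
  unfold Lfun. fold (tL a j x). rewrite (lim_eq _ l Hl). exact Hl.
Qed.

Lemma pw_in01 x c : 0 < c -> 0 < x < 1 -> 0 < pw x c < 1.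
Proof.
  intros Hc Hx. rewrite pw_pos by lra.
  assert (ln x < 0) by (rewrite <- ln_1; apply ln_increasing; lra).
  split; [apply exp_pos| apply exp_neg_lt1; nra].
Qed.

Lemma F_props a x : (forall k, 0 < a k) -> 0 < x < 1 ->
  Un_cv (fun n => prodR n (fun k => 1 - pw x (a k))) (Ffun a x) /\ 0 <= Ffun a x /\
  forall n, Ffun a x <= prodR n (fun k => 1 - pw x (a k)).
Proof.
  intros Hpos Hx.
  assert (Hf : forall k, 0 <= 1 - pw x (a k) <= 1).
  { intros k. pose proof (pw_in01 x (a k) (Hpos k) Hx). lra. }
  assert (Hd : Un_decreasing (fun n => prodR n (fun k => 1 - pw x (a k)))).
  { intros n. simpl. destruct (prodR_bounds n _ Hf). destruct (Hf n).
    rewrite <- (Rmult_1_r (prodR n _)) at 2. apply Rmult_le_compat_l; lra. }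
  destruct (decreasing_cv _ Hd) as [l Hl].
  { exists 0. intros z [n Hn]. subst z. unfold opp_seq. destruct (prodR_bounds n _ Hf). lra. }
  unfold Ffun. rewrite (lim_eq _ l Hl). split; [exact Hl|]. split.
  - apply Rnot_lt_le. intros Hneg. destruct (Hl (- l) ltac:(lra)) as [N HN].
    specialize (HN N (le_n N)). unfold Rdist in HN. destruct (prodR_bounds N _ Hf).
    apply Rabs_def2 in HN. lra.
  - intros n. apply (decreasing_ineq _ l Hd Hl n).
Qed.

Lemma prod_except n k (f : nat -> R) : (k < n)%nat ->
  prodR n (fun i => if Nat.eq_dec i k then 1 else f i) * f k = prodR n f.
Proof.
  induction n; intros Hk; [lia|]. simpl.
  destruct (Nat.eq_dec n k).
  - subst. rewrite (prodR_ext k _ f). ring.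
    intros i Hi. destruct (Nat.eq_dec i k); [lia|reflexivity].
  - rewrite <- IHn by lia. ring.
Qed.

Lemma tail_cmp a j x d N : (forall k, 0 < a k) -> cv_infty a -> x_alpha a <= 1 ->
  0 < x <= d -> d < x_alpha a ->
  Lfun a j x - sumR N (tL a j x) <= Lfun a j d - sumR N (tL a j d).
Proof.
  intros Hpos Hinf Hxa Hx Hd.
  pose proof (L_cv a j x Hpos Hinf Hxa ltac:(lra)) as Hlx.
  pose proof (L_cv a j d Hpos Hinf Hxa ltac:(lra)) as Hld.
  assert (Hg : Un_growing (fun n => sumR n (fun k => tL a j d k - tL a j x k))).
  { apply sumR_growing. intros k. pose proof (tL_mono a j x d k (Hpos k) Hx ltac:(lra)). lra. }
  assert (Hcv : Un_cv (fun n => sumR n (fun k => tL a j d k - tL a j x k)) (Lfun a j d - Lfun a j x)).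
  { eapply Un_cv_ext; [|apply (CV_minus _ _ _ _ Hld Hlx)]. intros n. simpl. rewrite sumR_minus. reflexivity. }
  pose proof (growing_ineq _ _ Hg Hcv N) as H. simpl in H. rewrite sumR_minus in H. lra.
Qed.

Lemma pointwise a j N c d x : (forall k, 0 < a k) -> cv_infty a -> x_alpha a <= 1 -> (2 <= j)%nat ->
  0 < c -> c <= x <= d -> d < x_alpha a ->
  I_integrand a j x <= EU_integrand a j N (- ln x) / x +
    / INR (fact (j - 1)) * (- ln c) ^ (j - 1) / c * (Lfun a j d - sumR N (tL a j d)).
Proof.
  intros Hpos Hinf Hxa Hj Hc Hx Hd.
  destruct j as [|m]; [lia|]. replace (S m - 1)%nat with m by lia.
  assert (Hx01 : 0 < x < 1) by lra.
  set (t := - ln x).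
  assert (Hlx : ln x < 0) by (rewrite <- ln_1; apply ln_increasing; lra).
  assert (Ht : 0 < t) by (unfold t; lra).
  assert (Habs : Rabs (ln x) = t) by (unfold t; apply Rabs_left; lra).
  assert (Hpw : forall k, pw x (a k) = exp (- (a k * t))).
  { intros k. rewrite pw_pos by lra. f_equal. unfold t. ring. }
  destruct (F_props a x Hpos Hx01) as [_ [HF0 HFle]].
  set (F := Ffun a x) in *.
  assert (HF1 : F <= 1) by (apply (HFle 0%nat)).
  set (f := fun i => 1 - exp (- (a i * t))).
  assert (HPN : F <= prodR N f).
  { rewrite (prodR_ext N f (fun k => 1 - pw x (a k))). apply HFle.
    intros k _. unfold f. rewrite Hpw. reflexivity. }
  set (mf := INR (fact m)).
  assert (Hmf : 0 < mf) by apply INR_fact_lt_0.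
  assert (HEU : t ^ m / mf * F * sumR N (tL a (S m) x) <= EU_integrand a (S m) N t).
  { unfold EU_integrand. replace (S m - 1)%nat with m by lia. fold mf.
    rewrite <- sumR_scal. apply sumR_le. intros k Hk.
    pose proof (prod_except N k f Hk) as HQ. fold f.
    set (Q := prodR N (fun i => if Nat.eq_dec i k then 1 else f i)) in *.
    pose proof (pw_in01 x (a k) (Hpos k) Hx01) as He. rewrite Hpw in He.
    set (e := exp (- (a k * t))) in *.
    assert (Hfk : f k = 1 - e) by reflexivity. rewrite Hfk in HQ.
    assert (HQF : F / (1 - e) <= Q).
    { apply (Rmult_le_reg_r (1 - e)); [lra|]. unfold Rdiv. rewrite Rmult_assoc, Rinv_l, Rmult_1_r by lra. lra. }
    unfold tL. rewrite Hpw. fold e. pose proof (Hpos k) as Hak.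
    assert (Hc0 : 0 <= a k * e * ((a k * t) ^ m / mf)).
    { apply Rmult_le_pos; [nra|]. apply Rmult_le_pos; [apply pow_le; nra| left; apply Rinv_0_lt_compat; lra]. }
    apply Rle_trans with (a k * e * ((a k * t) ^ m / mf) * (F / (1 - e))).
    - right. rewrite Rpow_mult_distr. simpl. field. lra.
    - apply Rmult_le_compat_l; auto. }
  pose proof (tail_cmp a (S m) x d N Hpos Hinf Hxa ltac:(lra) Hd) as Htail.
  pose proof (L_cv a (S m) x Hpos Hinf Hxa ltac:(lra)) as HLx.
  assert (HLN : sumR N (tL a (S m) x) <= Lfun a (S m) x).
  { apply (growing_ineq _ _ (sumR_growing _ (fun k => tL_nonneg a (S m) x k (Hpos k) Hx01)) HLx). }
  set (L := Lfun a (S m) x) in *. set (LN := sumR N (tL a (S m) x)) in *.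
  set (del := Lfun a (S m) d - sumR N (tL a (S m) d)) in *.
  assert (Htc : t <= - ln c) by (unfold t; assert (ln c <= ln x) by (apply ln_le'; lra); lra).
  assert (Htm : t ^ m <= (- ln c) ^ m) by (apply pow_incr; lra).
  assert (Htm0 : 0 <= t ^ m) by (apply pow_le; lra).
  unfold I_integrand. replace (S m - 1)%nat with m by lia. fold mf. fold F. fold L. rewrite Habs.
  assert (H1 : / mf * (L * F * t ^ m / x) = t ^ m / mf * F * LN / x + / mf * t ^ m * F * (L - LN) / x)
    by (field; lra).
  rewrite H1.
  assert (H2 : t ^ m / mf * F * LN / x <= EU_integrand a (S m) N t / x).
  { unfold Rdiv at 2. unfold Rdiv in HEU. apply Rmult_le_compat_r; [left; apply Rinv_0_lt_compat; lra|].
    unfold Rdiv. exact HEU. }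
  assert (H3 : / mf * t ^ m * F * (L - LN) / x <= / mf * (- ln c) ^ m / c * del).
  { assert (Hi : / x <= / c) by (apply Rinv_le_contravar; lra).
    assert (Hmi : 0 < / mf) by (apply Rinv_0_lt_compat; lra).
    assert (HFL : F * (L - LN) <= del) by nra.
    assert (HFL0 : 0 <= F * (L - LN)) by nra.
    unfold Rdiv.
    replace (/ mf * t ^ m * F * (L - LN) * / x) with (/ mf * (t ^ m * (F * (L - LN)) * / x)) by ring.
    replace (/ mf * (- ln c) ^ m * / c * del) with (/ mf * ((- ln c) ^ m * del * / c)) by ring.
    apply Rmult_le_compat_l; [lra|].
    apply Rmult_le_compat; try (left; apply Rinv_0_lt_compat; lra).
    - apply Rmult_le_pos; auto.
    - apply Rmult_le_compat; auto. lra. }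
  fold t in H2. lra.
Qed.

Lemma cont_sumR N (fs : nat -> R -> R) t : (forall k, continuous (fs k) t) ->
  continuous (fun t => sumR N (fun k => fs k t)) t.
Proof.
  intros H. induction N; simpl.
  - apply continuous_const.
  - apply (continuous_plus (fun t => sumR N (fun k => fs k t)) (fs N)); auto.
Qed.

Lemma cont_prodR N (fs : nat -> R -> R) t : (forall k, continuous (fs k) t) ->
  continuous (fun t => prodR N (fun k => fs k t)) t.
Proof.
  intros H. induction N; simpl.
  - apply continuous_const.
  - apply (continuous_mult (fun t => prodR N (fun k => fs k t)) (fs N)); auto.
Qed.

Lemma EU_cont a j N t : continuous (EU_integrand a j N) t.
Proof.
  unfold EU_integrand.
  apply (cont_sumR N (fun k t => a k * exp (- (a k * t)) * ((a k * t) ^ (j - 1) / INR (fact (j - 1)))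
    * prodR N (fun i => if Nat.eq_dec i k then 1 else 1 - exp (- (a i * t))))).
  intros k.
  apply (continuous_mult (fun t => a k * exp (- (a k * t)) * ((a k * t) ^ (j - 1) / INR (fact (j - 1))))
    (fun t => prodR N (fun i => if Nat.eq_dec i k then 1 else 1 - exp (- (a i * t))))).
  - apply (@ex_derive_continuous R_AbsRing R_NormedModule). auto_derive. trivial.
  - apply (cont_prodR N (fun i t => if Nat.eq_dec i k then 1 else 1 - exp (- (a i * t)))).
    intros i. destruct (Nat.eq_dec i k).
    + apply continuous_const.
    + apply (@ex_derive_continuous R_AbsRing R_NormedModule). auto_derive. trivial.
Qed.

Lemma exR a j N t1 t2 : ex_RInt (EU_integrand a j N) t1 t2.
Proof. apply (@ex_RInt_continuous R_CompleteNormedModule). intros; apply EU_cont. Qed.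

Lemma Q_bounds a N k t : (forall i, 0 < a i) -> 0 <= t ->
  0 <= prodR N (fun i => if Nat.eq_dec i k then 1 else 1 - exp (- (a i * t))) <= 1.
Proof.
  intros Hpos Ht. apply prodR_bounds. intros i. destruct (Nat.eq_dec i k); [lra|].
  pose proof (exp_pos (- (a i * t))). pose proof (Hpos i).
  assert (exp (- (a i * t)) <= 1) by (rewrite <- exp_0; apply exp_le'; nra). lra.
Qed.

Lemma EU_nonneg a j N t : (forall i, 0 < a i) -> 0 <= t -> 0 <= EU_integrand a j N t.
Proof.
  intros Hpos Ht. unfold EU_integrand.
  apply Rle_trans with (sumR N (fun _ => 0)).
  { clear. induction N; simpl; lra. }
  apply sumR_le. intros k _. pose proof (Q_bounds a N k t Hpos Ht). pose proof (Hpos k).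
  pose proof (exp_pos (- (a k * t))).
  assert (0 <= (a k * t) ^ (j - 1) / INR (fact (j - 1))).
  { apply Rmult_le_pos; [apply pow_le; nra| left; apply Rinv_0_lt_compat, INR_fact_lt_0]. }
  apply Rmult_le_pos; [|lra]. apply Rmult_le_pos; [nra|lra].
Qed.

Lemma deriv_sumR N (fs dfs : nat -> R -> R) t : (forall k, is_derive (fs k) t (dfs k t)) ->
  is_derive (fun t => sumR N (fun k => fs k t)) t (sumR N (fun k => dfs k t)).
Proof.
  intros H. induction N; simpl.
  - apply (is_derive_const 0).
  - apply (is_derive_plus (fun t => sumR N (fun k => fs k t)) (fs N)); auto.
Qed.

Lemma EU_bound a j N T : (forall i, 0 < a i) -> 0 <= T ->
  RInt (EU_integrand a j N) 0 T <= sumR N (fun _ => 2 ^ (S (j - 1))).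
Proof.
  intros Hpos HT. set (m := (j - 1)%nat).
  set (h := fun t => sumR N (fun k => 2 ^ m * a k * exp (- (a k * t) / 2))).
  set (H := fun t => sumR N (fun k => - 2 ^ (S m) * exp (- (a k * t) / 2))).
  assert (HI : is_RInt h 0 T (minus (H T) (H 0))).
  { apply (@is_RInt_derive R_CompleteNormedModule).
    - intros x _. unfold H, h.
      apply (deriv_sumR N (fun k t => - 2 ^ (S m) * exp (- (a k * t) / 2))
               (fun k t => 2 ^ m * a k * exp (- (a k * t) / 2))).
      intros k. auto_derive; [trivial|]. match goal with |- _ * (_ * exp ?u) = _ * exp ?v => replace u with v by (unfold Rdiv; reflexivity) end. unfold Rdiv. change RinvImpl.Rinv with Rinv. simpl. field.
    - intros x _. unfold h.
      apply (cont_sumR N (fun k t => 2 ^ m * a k * exp (- (a k * t) / 2))). intros k.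
      apply (@ex_derive_continuous R_AbsRing R_NormedModule). auto_derive. trivial. }
  assert (Hle : RInt (EU_integrand a j N) 0 T <= RInt h 0 T).
  { apply RInt_le; auto. apply exR. eexists; eauto.
    intros t Ht. unfold EU_integrand, h. fold m. apply sumR_le. intros k _.
    pose proof (Q_bounds a N k t Hpos ltac:(lra)). pose proof (Hpos k).
    pose proof (exp_pos (- (a k * t))).
    set (Q := prodR N _) in *.
    assert (Hp : (a k * t) ^ m / INR (fact m) <= 2 ^ m * exp (a k * t / 2)).
    { pose proof (pow_le_exp (a k * t / 2) m ltac:(nra)).
      replace ((a k * t) ^ m) with (2 ^ m * (a k * t / 2) ^ m) by (rewrite <- Rpow_mult_distr; f_equal; field).
      pose proof (pow_lt 2 m ltac:(lra)).
      unfold Rdiv in *. rewrite Rmult_assoc. apply Rmult_le_compat_l; lra. }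
    assert (Hp0 : 0 <= (a k * t) ^ m / INR (fact m)).
    { apply Rmult_le_pos; [apply pow_le; nra| left; apply Rinv_0_lt_compat, INR_fact_lt_0]. }
    assert (Hex : exp (- (a k * t)) * exp (a k * t / 2) = exp (- (a k * t) / 2)).
    { rewrite <- exp_plus. f_equal. field. }
    apply Rle_trans with (a k * exp (- (a k * t)) * ((a k * t) ^ m / INR (fact m))).
    { rewrite <- (Rmult_1_r (a k * exp (- (a k * t)) * _)) at 2. apply Rmult_le_compat_l; [|lra].
      apply Rmult_le_pos; [nra|lra]. }
    apply Rle_trans with (a k * exp (- (a k * t)) * (2 ^ m * exp (a k * t / 2))).
    { apply Rmult_le_compat_l; [nra|lra]. }
    right. rewrite <- Hex. ring. }
  rewrite (is_RInt_unique _ _ _ _ HI) in Hle.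
  assert (H T <= 0).
  { unfold H. apply Rle_trans with (sumR N (fun _ => 0)); [|clear; induction N; simpl; lra].
    apply sumR_le. intros k _. pose proof (exp_pos (- (a k * T) / 2)). pose proof (pow_lt 2 (S m) ltac:(lra)). nra. }
  assert (H 0 = - sumR N (fun _ => 2 ^ S m)).
  { unfold H. clear. induction N; cbn [sumR]; [ring|]. rewrite IHN.
    replace (- (a N * 0) / 2) with 0 by field. rewrite exp_0. ring. }
  unfold minus, plus, opp in Hle. simpl in Hle. lra.
Qed.

Lemma G_mono a j N T1 T2 : (forall i, 0 < a i) -> 0 <= T1 <= T2 ->
  RInt (EU_integrand a j N) 0 T1 + RInt (EU_integrand a j N) T1 T2 = RInt (EU_integrand a j N) 0 T2
  /\ 0 <= RInt (EU_integrand a j N) T1 T2.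
Proof.
  intros Hpos HT. split.
  - apply (RInt_Chasles (V:=R_CompleteNormedModule)); apply exR.
  - apply RInt_ge_0; [lra| apply exR|]. intros; apply EU_nonneg; auto; lra.
Qed.

Lemma EU_ge a j N T : (forall i, 0 < a i) -> 0 <= T -> RInt (EU_integrand a j N) 0 T <= EU a j N.
Proof.
  intros Hpos HT. set (G := fun T => RInt (EU_integrand a j N) 0 T).
  set (E := fun y => exists T, 0 <= T /\ y = G T).
  assert (Hb : bound E).
  { exists (sumR N (fun _ => 2 ^ (S (j - 1)))). intros y [T' [H1 H2]]. subst. apply EU_bound; auto. }
  destruct (completeness E Hb (ex_intro _ (G 0) (ex_intro _ 0 (conj (Rle_refl 0) eq_refl)))) as [l [Hl1 Hl2]].
  assert (Hspec : forall eps, eps > 0 -> exists T0, forall T (pr : Riemann_integrable (EU_integrand a j N) 0 T),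
     T0 <= T -> Rabs (RiemannInt pr - l) < eps).
  { intros eps Heps.
    assert (exists T0, 0 <= T0 /\ l - eps < G T0) as [T0 [HT0 HG0]].
    { apply NNPP. intros Hn. assert (is_upper_bound E (l - eps)).
      { intros y [T' [H1 H2]]. subst. apply Rnot_lt_le. intros Hc. apply Hn. eauto. }
      specialize (Hl2 _ H). lra. }
    exists T0. intros T' pr HT'. rewrite <- RInt_Reals.
    destruct (G_mono a j N T0 T' Hpos ltac:(lra)) as [Hc Hnn].
    assert (G T' <= l) by (apply Hl1; exists T'; split; [lra|reflexivity]).
    fold (G T'). fold (G T0) in Hc. unfold G in *; cbv beta in *. apply Rabs_def1; lra. }
  assert (Hex : exists l, forall eps, eps > 0 -> exists T0, forall T (pr : Riemann_integrable (EU_integrand a j N) 0 T),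
     T0 <= T -> Rabs (RiemannInt pr - l) < eps) by eauto.
  pose proof (epsilon_spec (inhabits 0) _ Hex) as HE. fold (int_0_inf (EU_integrand a j N)) in HE.
  fold (EU a j N) in HE.
  apply Rnot_lt_le. intros Hlt.
  destruct (HE (G T - EU a j N) ltac:(unfold G in *; cbv beta in *; lra)) as [T0 HT0].
  set (T' := Rmax T0 T).
  pose proof (ex_RInt_Reals_0 _ 0 T' (exR a j N 0 T')) as pr.
  specialize (HT0 T' pr (Rmax_l _ _)). rewrite <- RInt_Reals in HT0.
  destruct (G_mono a j N T T' Hpos (conj HT (Rmax_r _ _))) as [Hc Hnn].
  apply Rabs_def2 in HT0. unfold G in *; cbv beta in *. lra.
Qed.

Lemma cov a j N c d : 0 < c <= d ->
  is_RInt (fun x => EU_integrand a j N (- ln x) / x) c d (RInt (EU_integrand a j N) (- ln d) (- ln c)).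
Proof.
  intros Hcd.
  assert (Hmm : forall x, Rmin c d <= x <= Rmax c d -> 0 < x).
  { intros x Hx. rewrite Rmin_left in Hx by lra. lra. }
  pose proof (is_RInt_comp (V:=R_CompleteNormedModule) (EU_integrand a j N) (fun x => - ln x) (fun x => - / x) c d
    (fun x _ => EU_cont a j N _)) as H.
  assert (H2 : forall x, Rmin c d <= x <= Rmax c d -> is_derive (fun x => - ln x) x (- / x) /\ continuous (fun x => - / x) x).
  { intros x Hx. specialize (Hmm x Hx). split.
    - auto_derive; [lra|]. field. lra.
    - apply (@ex_derive_continuous R_AbsRing R_NormedModule). auto_derive. lra. }
  specialize (H H2). apply is_RInt_opp in H.
  rewrite (opp_RInt_swap (V:=R_CompleteNormedModule)) in H by apply exR.
  eapply is_RInt_ext; [|exact H]. intros x Hx.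
  assert (0 < x) by (apply Hmm; lra).
  unfold opp, scal; simpl. unfold mult; simpl. field. lra.
Qed.

Theorem proposition2 (a : nat -> R) (j : nat) :
  (forall k, 0 < a k) ->
  cv_infty a ->
  0 < x_alpha a <= 1 ->
  (2 <= j)%nat ->
  I_infinite a j ->
  forall M : R, exists N0 : nat, forall N : nat, (N0 <= N)%nat -> M <= EU a j N.
Proof.
  intros Hpos Hinf [Hxa0 Hxa1] Hj HI M.
  destruct (HI (M + 1)) as [c [d [[Hc Hcd] [Hd [pr Hpr]]]]].
  assert (Hlc : ln c < 0) by (rewrite <- ln_1; apply ln_increasing; lra).
  assert (Hld : ln d < 0) by (rewrite <- ln_1; apply ln_increasing; lra).
  assert (Hlcd : ln c <= ln d) by (apply ln_le'; lra).
  set (K := / INR (fact (j - 1)) * (- ln c) ^ (j - 1) / c).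
  assert (HK : 0 <= K).
  { unfold K. unfold Rdiv. apply Rmult_le_pos; [apply Rmult_le_pos|].
    - left; apply Rinv_0_lt_compat, INR_fact_lt_0.
    - apply pow_le; lra.
    - left; apply Rinv_0_lt_compat; lra. }
  set (z := K * (d - c)).
  assert (Hz : 0 <= z) by (unfold z; apply Rmult_le_pos; lra).
  set (eta := / (z + 1)).
  assert (Heta : 0 < eta) by (unfold eta; apply Rinv_0_lt_compat; lra).
  assert (Hze : z * eta <= 1).
  { unfold eta. apply (Rmult_le_reg_r (z + 1)); [lra|].
    rewrite Rmult_assoc, Rinv_l by lra. lra. }
  pose proof (L_cv a j d Hpos Hinf Hxa1 ltac:(lra)) as HLd.
  destruct (HLd eta Heta) as [N0 HN0]. exists N0. intros N HN.
  specialize (HN0 N HN). unfold Rdist in HN0. apply Rabs_def2 in HN0.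
  set (del := Lfun a j d - sumR N (tL a j d)).
  assert (Hdel : del < eta) by (unfold del; lra).
  assert (Hzd : z * del <= 1) by nra.
  set (g := fun x => EU_integrand a j N (- ln x) / x).
  set (v := RInt (EU_integrand a j N) (- ln d) (- ln c)).
  pose proof (cov a j N c d ltac:(lra)) as Hcov. fold g v in Hcov.
  assert (Hg2 : is_RInt (fun x => g x + K * del) c d (v + (d - c) * (K * del))).
  { apply (is_RInt_plus (V:=R_NormedModule) g (fun _ => K * del) c d v ((d - c) * (K * del))); auto.
    apply (is_RInt_const (V:=R_NormedModule)). }
  assert (Hle : RInt (I_integrand a j) c d <= RInt (fun x => g x + K * del) c d).
  { apply RInt_le; auto.
    - apply ex_RInt_Reals_1; exact pr.
    - eexists; exact Hg2.
    - intros x Hx. unfold g, K, del. apply pointwise; auto; lra. }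
  rewrite RInt_Reals with (pr := pr) in Hle.
  rewrite (is_RInt_unique _ _ _ _ Hg2) in Hle.
  assert (Hv : M <= v) by (unfold z in Hzd; nra).
  destruct (G_mono a j N (- ln d) (- ln c) Hpos ltac:(lra)) as [Hc1 _].
  destruct (G_mono a j N 0 (- ln d) Hpos ltac:(lra)) as [_ Hc2].
  pose proof (EU_ge a j N (- ln c) Hpos ltac:(lra)). fold v in Hc1. lra.
Qed.
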